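(* Let $1\le s\le n$, $0<\gamma<1$, and let $\mathbf{A}\in\mathbb{R}^{m\times n}$ satisfy $\inf\{\|\mathbf{A}\mathbf{v}\|_2:\mathbf{v}\in S_\gamma\}\ge\eta$ for some $\eta>0$. Let $\mathbf{x}\in\mathbb{R}^n$, $\mathbf{y}=\mathbf{A}\mathbf{x}+\mathbf{e}$ with $\|\mathbf{e}\|_2\le\epsilon$, and let $\widehat{\mathbf{x}}$ be a minimizer of $\|\mathbf{z}\|_1$ over $\mathbf{z}\in\mathbb{R}^n$ subject to $\|\mathbf{y}-\mathbf{A}\mathbf{z}\|_2\le\epsilon$. Then \[ \|\widehat{\mathbf{x}}-\mathbf{x}\|_2\ \le\ \frac{2\gamma+2}{1-\gamma}\,\sigma_s(\mathbf{x})+\frac{2\epsilon}{\eta}. \]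
   Context: $S_\gamma:=\{\mathbf{v}\in\mathbb{R}^n:\|\mathbf{v}\|_2=1,\ \|\mathbf{v}_T\|_1\ge\gamma\|\mathbf{v}_{T^c}\|_1\text{ for some }T\subset[n],|T|\le s\}$, where $\mathbf{v}_T$ agrees with $\mathbf{v}$ on $T$ and is $0$ elsewhere. $\sigma_s(\mathbf{x}):=\inf\{\|\mathbf{x}-\mathbf{v}\|_1:\mathbf{v}\text{ has at most }s\text{ nonzero entries}\}$. *)

(* Defs.v *)
From HB Require Import structures.
From mathcomp Require Import all_boot all_order all_algebra.
From mathcomp Require Import classical_sets reals.
Set Implicit Arguments. Unset Strict Implicit. Unset Printing Implicit Defensive.
Import Order.TTheory GRing.Theory Num.Theory.
Local Open Scope ring_scope.

Section Defs.
Variable R : realType.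

Definition l1norm n (v : 'cV[R]_n) : R := \sum_(i < n) `|v i 0|.
Definition l2norm n (v : 'cV[R]_n) : R := Num.sqrt (\sum_(i < n) (v i 0) ^+ 2).
Definition restr n (T : {set 'I_n}) (v : 'cV[R]_n) : 'cV[R]_n :=
  \col_i (if i \in T then v i 0 else 0).
Definition supp n (v : 'cV[R]_n) : {set 'I_n} := [set i | v i 0 != 0].
Definition sparse n (s : nat) (v : 'cV[R]_n) : Prop := (#|supp v| <= s)%N.
Definition S_gamma n (s : nat) (gamma : R) (v : 'cV[R]_n) : Prop :=
  l2norm v = 1 /\
  exists T : {set 'I_n}, (#|T| <= s)%N /\ l1norm (restr T v) >= gamma * l1norm (restr (~: T) v).
Definition sigma_s n (s : nat) (x : 'cV[R]_n) : R :=
  inf [set l1norm (x - (v : 'cV[R]_n)) | v in [set v : 'cV[R]_n | sparse s v]]%classic.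
End Defs.

(* Main.v *)
Require Import Defs.
From HB Require Import structures.
From mathcomp Require Import all_boot all_order all_algebra.
From mathcomp Require Import classical_sets reals.
From mathcomp Require Import ring lra.
Import Order.TTheory GRing.Theory Num.Theory.
Local Open Scope ring_scope.

Section Helpers.
Variable R : realType.

Lemma sum_sqr_le (I : Type) (r : seq I) (G : I -> R) :
  (forall i, 0 <= G i) -> \sum_(i <- r) G i ^+ 2 <= (\sum_(i <- r) G i) ^+ 2.
Proof.
move=> G0; elim: r => [|a r IH]; first by rewrite !big_nil expr0n.
rewrite !big_cons.
have S0 : 0 <= \sum_(i <- r) G i by apply: sumr_ge0.
have := G0 a; nra.
Qed.

Lemma l2_le_l1 n (v : 'cV[R]_n) : l2norm v <= l1norm v.
Proof.
rewrite /l2norm /l1norm.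
have h0 : 0 <= \sum_(i < n) `|v i 0| by apply: sumr_ge0.
rewrite -[X in _ <= X](ger0_norm h0) -sqrtr_sqr ler_sqrt; last by rewrite sqr_ge0.
rewrite (eq_bigr (fun i => `|v i 0| ^+ 2)); last first.
  by move=> i _; rewrite real_normK ?num_real.
exact: sum_sqr_le.
Qed.

Lemma l2_ge0 n (v : 'cV[R]_n) : 0 <= l2norm v.
Proof. exact: sqrtr_ge0. Qed.

Lemma l2Z n (c : R) (v : 'cV[R]_n) : l2norm (c *: v) = `|c| * l2norm v.
Proof.
rewrite /l2norm -sqrtr_sqr -sqrtrM ?sqr_ge0 // mulr_sumr.
by congr Num.sqrt; apply: eq_bigr => i _; rewrite mxE exprMn.
Qed.

Lemma l2N n (v : 'cV[R]_n) : l2norm (- v) = l2norm v.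
Proof.
by rewrite -scaleN1r l2Z normrN normr1 mul1r.
Qed.

Lemma cauchy_schwarz n (a b : 'I_n -> R) :
  (\sum_i a i * b i) ^+ 2 <= (\sum_i a i ^+ 2) * (\sum_i b i ^+ 2).
Proof.
set SA := \sum_i a i ^+ 2; set SB := \sum_i b i ^+ 2; set SAB := \sum_i a i * b i.
have L : \sum_i \sum_j (a i * b j - a j * b i) ^+ 2 = 2 * (SA * SB) - 2 * SAB ^+ 2.
  have E : forall i j, (a i * b j - a j * b i) ^+ 2 =
     a i ^+ 2 * b j ^+ 2 + b i ^+ 2 * a j ^+ 2 - 2 * ((a i * b i) * (a j * b j)).
    by move=> i j; ring.
  have E2 : forall i, \sum_j (a i * b j - a j * b i) ^+ 2 =
      a i ^+ 2 * SB + b i ^+ 2 * SA - 2 * ((a i * b i) * SAB).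
    move=> i; under eq_bigr do rewrite E.
    by rewrite sumrB big_split /= /SA /SB /SAB !mulr_sumr.
  under eq_bigr do rewrite E2.
  rewrite sumrB big_split /= -!mulr_suml -/SA -/SB -mulr_sumr -mulr_suml -/SAB; ring.
have : 0 <= \sum_i \sum_j (a i * b j - a j * b i) ^+ 2.
  by apply: sumr_ge0 => i _; apply: sumr_ge0 => j _; apply: sqr_ge0.
rewrite L; lra.
Qed.

Lemma l2D n (u v : 'cV[R]_n) : l2norm (u + v) <= l2norm u + l2norm v.
Proof.
have h0 : 0 <= l2norm u + l2norm v by rewrite addr_ge0 ?l2_ge0.
rewrite -[X in _ <= X](ger0_norm h0) -sqrtr_sqr /l2norm ler_sqrt ?sqr_ge0 //.
set SA := \sum_i u i 0 ^+ 2; set SB := \sum_i v i 0 ^+ 2.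
have A0 : 0 <= SA by apply: sumr_ge0 => i _; apply: sqr_ge0.
have B0 : 0 <= SB by apply: sumr_ge0 => i _; apply: sqr_ge0.
have -> : \sum_i (u + v) i 0 ^+ 2 = SA + SB + 2 * \sum_i u i 0 * v i 0.
  rewrite /SA /SB mulr_sumr -!big_split /=; apply: eq_bigr => i _; rewrite mxE; ring.
have CS := @cauchy_schwarz n (fun i => u i 0) (fun i => v i 0).
rewrite -/SA -/SB in CS.
have : \sum_i u i 0 * v i 0 <= Num.sqrt SA * Num.sqrt SB.
  rewrite -sqrtrM //; apply: le_trans (ler_norm _) _.
  by rewrite -sqrtr_sqr ler_sqrt // mulr_ge0.
have sA := sqr_sqrtr A0; have sB := sqr_sqrtr B0.
have := sqrtr_ge0 SA; have := sqrtr_ge0 SB.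
nra.
Qed.

Lemma l1_restr n (T : {set 'I_n}) (v : 'cV[R]_n) :
  l1norm (restr T v) = \sum_i (if i \in T then `|v i 0| else 0).
Proof. by apply: eq_bigr => i _; rewrite mxE; case: (i \in T); rewrite ?normr0. Qed.

Lemma l1_split n (T : {set 'I_n}) (v : 'cV[R]_n) :
  l1norm v = l1norm (restr T v) + l1norm (restr (~: T) v).
Proof.
rewrite !l1_restr -big_split; apply: eq_bigr => i _; rewrite finset.in_setC.
by case: (i \in T) => /=; rewrite ?addr0 ?add0r.
Qed.

Lemma l1Z n (T : {set 'I_n}) (c : R) (v : 'cV[R]_n) :
  l1norm (restr T (c *: v)) = `|c| * l1norm (restr T v).
Proof.
rewrite !l1_restr mulr_sumr; apply: eq_bigr => i _; rewrite mxE normrM.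
by case: (i \in T); rewrite ?mulr0.
Qed.
Lemma normB_aux (u w : R) : `|u| - `|w| <= `|u + w|.
Proof. exact: lerB_normD. Qed.
End Helpers.
Arguments normB_aux {R}.
Arguments l2_ge0 {R n}. Arguments l2D {R n}. Arguments l2N {R n}. Arguments l2Z {R n}.
Arguments l2_le_l1 {R n}. Arguments l1_split {R n}. Arguments l1Z {R n}. Arguments l1_restr {R n}.

Theorem theorem4p10 (R : realType) (m n s : nat) (gamma eta eps : R)
  (A : 'M[R]_(m, n)) (x xhat : 'cV[R]_n) (e : 'cV[R]_m) :
  (1 <= s)%N -> (s <= n)%N -> 0 < gamma -> gamma < 1 -> 0 < eta ->
  (* inf { ||A v||_2 : v in S_gamma } >= eta *)
  (forall v : 'cV[R]_n, S_gamma s gamma v -> eta <= l2norm (A *m v)) ->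
  l2norm e <= eps ->
  let y := A *m x + e in
  (* xhat minimizes ||z||_1 subject to ||y - A z||_2 <= eps *)
  l2norm (y - A *m xhat) <= eps ->
  (forall z : 'cV[R]_n, l2norm (y - A *m z) <= eps -> l1norm xhat <= l1norm z) ->
  l2norm (xhat - x) <= (2 * gamma + 2) / (1 - gamma) * sigma_s s x + 2 * eps / eta.
Proof.
move=> s1 sn g0 g1 eta0 Hinf He y Hxhat Hmin.
set h := xhat - x.
set C := (2 * gamma + 2) / (1 - gamma).
have C0 : 0 < C by rewrite /C divr_gt0 //; lra.
have CE : C * (1 - gamma) = 2 * gamma + 2.
  by rewrite /C mulfVK //; apply/eqP => /eqP; lra.
have eps0 : 0 <= eps := le_trans (l2_ge0 e) He.
have K0 : 0 <= 2 * eps / eta by rewrite divr_ge0 //; lra.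
have ye : y - A *m x = e by rewrite /y addrC addKr.
have Ah : l2norm (A *m h) <= 2 * eps.
  have -> : A *m h = (y - A *m x) - (y - A *m xhat).
    by apply/esym; rewrite opprB [LHS]addrC addrA (subrK y) /h mulmxBr.
  have := l2D (y - A *m x) (- (y - A *m xhat)).
  rewrite l2N ye => H; apply: (le_trans H); apply: le_trans (lerD He Hxhat) _.
  by rewrite -[2]/(1 + 1) mulrDl mul1r.
have Hx : l1norm xhat <= l1norm x by apply: Hmin; rewrite ye.
have key : forall v : 'cV[R]_n, sparse s v ->
    l2norm h <= C * l1norm (x - v) + 2 * eps / eta.
  move=> v sv; set T := supp v.
  have Tc : (#|T| <= s)%N := sv.
  set a := l1norm (restr T h); set b := l1norm (restr (~: T) h).
  set p := l1norm (restr T x); set q := l1norm (restr (~: T) x).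
  set L := l1norm (x - v).
  have hq : q <= L.
    rewrite /q l1_restr /L /l1norm; apply: ler_sum => i _.
    case: ifP => iT; last exact: normr_ge0.
    move: iT; rewrite finset.in_setC inE negbK => /eqP v0.
    by rewrite !mxE v0 subr0.
  have hcone : b <= a + 2 * q.
    have E : p - a + b - q = \sum_i (if i \in T then `|x i 0| - `|h i 0|
                                      else `|h i 0| - `|x i 0|).
      rewrite /p /a /b /q !l1_restr -!sumrB -big_split -sumrB.
      apply: eq_bigr => i _; rewrite finset.in_setC.
      by case: (i \in T) => /=; lra.
    have H1 : p - a + b - q <= l1norm xhat.
      rewrite E /l1norm; apply: ler_sum => i _.
      have xh : xhat i 0 = x i 0 + h i 0 by rewrite /h !mxE; ring.
      rewrite xh; case: (i \in T); first exact: (normB_aux (x i 0) (h i 0)).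
      by rewrite [x i 0 + _]addrC; exact: normB_aux.
    have H2 : l1norm x = p + q := l1_split T x.
    lra.
  have L0 : 0 <= L by apply: sumr_ge0 => i _; exact: normr_ge0.
  have CL0 : 0 <= C * L by rewrite mulr_ge0 // ltW.
  case: (lerP (gamma * b) a) => hab.
    have lh0 := l2_ge0 h.
    case: (eqVneq (l2norm h) 0) => [->|hn0]; first lra.
    have hpos : 0 < l2norm h by rewrite lt_def hn0.
    set c := (l2norm h)^-1.
    have c0 : 0 < c by rewrite invr_gt0.
    have ch : c * l2norm h = 1 by rewrite mulVf.
    have Sw : S_gamma s gamma (c *: h).
      split; first by rewrite l2Z (ger0_norm (ltW c0)).
      exists T; split => //.
      rewrite !l1Z (ger0_norm (ltW c0)) -/a -/b mulrCA.
      by rewrite ler_pM2l.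
    have := Hinf _ Sw; rewrite -scalemxAr l2Z (ger0_norm (ltW c0)) => Hw.
    have : eta * l2norm h <= 2 * eps.
      apply: le_trans Ah.
      have := ler_wpM2r (ltW hpos) Hw.
      by rewrite mulrAC ch mul1r.
    move=> H1; have Hf : l2norm h <= 2 * eps / eta by rewrite ler_pdivlMr // mulrC.
    lra.
  have lh := l2_le_l1 h.
  rewrite (l1_split T h) -/a -/b in lh.
  have : (1 - gamma) * (a + b) <= (1 - gamma) * (C * L).
    rewrite mulrA [_ * C]mulrC CE.
    have b0 : 0 <= b by apply: sumr_ge0 => i _; exact: normr_ge0.
    have t1 : (1 - gamma) * b <= 2 * q by nra.
    have t2 : (1 + gamma) * ((1 - gamma) * b) <= (1 + gamma) * (2 * q).
      by rewrite ler_pM2l //; lra.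
    have t3 : (1 - gamma) * a <= (1 - gamma) * (gamma * b).
      by rewrite ler_pM2l; lra.
    nra.
  rewrite ler_pM2l; last lra.
  lra.
have : (l2norm h - 2 * eps / eta) / C <= sigma_s s x.
  apply: lb_le_inf.
    exists (l1norm (x - 0)); exists 0 => //.
    rewrite /sparse /= /supp.
    have -> : [set i | (0 : 'cV[R]_n) i 0 != 0] = finset.set0.
      by apply/setP => i; rewrite !inE mxE eqxx.
    by rewrite cards0.
  move=> z [v sv <-].
  rewrite ler_pdivrMr //.
  have := key v sv; lra.
rewrite ler_pdivrMr // => Hf.
lra.
Qed.
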